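(* Let $R$, $G$, $*$, $\sigma$ and $\mathcal{S}$ be as in the context, and suppose $\mathcal{S}$ is anticommutative. Let $x,y\in G\setminus G_*$ with $\sigma(y)\neq -1$. Then at least one of the following holds: - $x^y\in\{x,x^*\}$; - $\sigma(xy)=-1$, $xy=x^*y^*$ and $xy^*=x^*y$.
   Context: Throughout, $R$ is a commutative ring with unity with $\operatorname{char}(R)\neq 2$, and $\mathcal{U}(R)$ is its unit group. $G$ is a group with an involution $*$, i.e. a map $x\mapsto x^*$ with $(xy)^*=y^*x^*$ and $(x^* )^*=x$. The map $\sigma:G\to\mathcal{U}(R)$ is a nontrivial group homomorphism with kernel $N=\ker\sigma$, and it is compatible with $*$: $xx^*\in N$ for all $x\in G$. The group ring $RG$ carries the involution $\left(\sum_{x\in G}\alpha_x x\right)^{\sigma*}=\sum_{x\in G}\sigma(x)\alpha_x x^*$. Write $G_*=\{x\in G: x^*=x\}$ and $N_*=G_*\cap N$. Let $\mathcal{S}$ be the $R$-submodule of $RG$ spanned by the union of the following three sets: - $2\mathcal{S}_1=\{2x: x\in N_*\}$; - $\mathcal{S}_2=\{\alpha x: x\in G_*\setminus N,\ \alpha\in R,\ \alpha(1-\sigma(x))=0\}$; - $\mathcal{S}_3=\{x+\sigma(x)x^*: x\in G\setminus G_*\}$. $\mathcal{S}$ is called anticommutative if $ab+ba=0$ for all $a,b\in\mathcal{S}$. The conjugate of $x$ by $y$ is $x^y=y^{-1}xy$. *)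

(* Defs.v *)
(* Group rings RG for an arbitrary (possibly infinite) group G
   are represented by formal finite sums: lists of (coefficient, group element)
   pairs, compared through their coefficient functions. *)
From HB Require Import structures.
From mathcomp Require Import all_boot all_order all_algebra.
Set Implicit Arguments. Unset Strict Implicit. Unset Printing Implicit Defensive.
Import GRing.Theory.
Local Open Scope ring_scope.

Section GroupRing.
Variables (R : comNzRingType) (G : groupType).

Definition rg := seq (R * G).

Definition rg_coeff (a : rg) (g : G) : R := \sum_(p <- a | p.2 == g) p.1.

Definition rg_zero (a : rg) : Prop := forall g, rg_coeff a g = 0.

Definition rg_eq (a b : rg) : Prop := forall g, rg_coeff a g = rg_coeff b g.

Definition rg_add (a b : rg) : rg := a ++ b.
Definition rg_scale (r : R) (a : rg) : rg := [seq (r * p.1, p.2) | p <- a].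
Definition rg_mul (a b : rg) : rg :=
  [seq (p.1 * q.1, (p.2 * q.2)%g) | p <- a, q <- b].

Variables (star : G -> G) (sigma : G -> R).

Definition S_gen (v : rg) : Prop :=
  (exists x : G, star x = x /\ sigma x = 1 /\ v = [:: (2%:R, x)])
  \/ (exists (x : G) (alpha : R), star x = x /\ sigma x != 1 /\
        alpha * (1 - sigma x) = 0 /\ v = [:: (alpha, x)])
  \/ (exists x : G, star x != x /\ v = [:: (1, x); (sigma x, star x)]).

Definition in_S (a : rg) : Prop :=
  exists l : seq (R * rg), (forall c, c \in l -> S_gen c.2) /\
    rg_eq a (flatten [seq rg_scale c.1 c.2 | c <- l]).

Definition S_anticommutative : Prop :=
  forall a b, in_S a -> in_S b -> rg_zero (rg_add (rg_mul a b) (rg_mul b a)).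

End GroupRing.

(* Main.v *)
Require Import Defs.
From HB Require Import structures.
From mathcomp Require Import all_boot all_order all_algebra.
From mathcomp Require Import ring.
Import GRing.Theory.
Local Open Scope ring_scope.

Section H.
Variables (R : comNzRingType) (G : groupType).
Variables (star : G -> G) (sigma : G -> R).
Hypotheses (hchar : (2%:R : R) != 0)
  (hstarM : forall x y : G, star (x * y)%g = (star y * star x)%g)
  (hstarK : forall x : G, star (star x) = x)
  (hsigmaM : forall x y : G, sigma (x * y)%g = sigma x * sigma y)
  (hcompat : forall x : G, sigma (x * star x)%g = 1)
  (hanti : S_anticommutative star sigma).

Lemma coeff_cons r h (l : rg R G) g : rg_coeff ((r, h) :: l) g = (if h == g then r else 0) + rg_coeff l g.
Proof. by rewrite /rg_coeff big_cons /=; case: (h == g); rewrite ?add0r. Qed.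
Lemma coeff_nil g : rg_coeff ([::] : rg R G) g = 0.
Proof. by rewrite /rg_coeff big_nil. Qed.
Lemma coeff_cat (l1 l2 : rg R G) g : rg_coeff (l1 ++ l2) g = rg_coeff l1 g + rg_coeff l2 g.
Proof. by rewrite /rg_coeff big_cat. Qed.

Lemma eqgl (z a b : G) : (z * a == z * b)%g = (a == b).
Proof. by apply/eqP/eqP => [/mulgI|->]. Qed.
Lemma eqgr (z a b : G) : (a * z == b * z)%g = (a == b).
Proof. by apply/eqP/eqP => [/mulIg|->]. Qed.

Definition aa (z : G) : rg R G := [:: (1, z); (sigma z, star z)].

Lemma inS3 z : star z != z -> in_S star sigma (aa z).
Proof.
move=> hz; exists [:: (1, aa z)]; split.
  by move=> c; rewrite inE => /eqP ->; right; right; exists z.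
by move=> g; rewrite /= /rg_scale /= !coeff_cons coeff_nil !mul1r.
Qed.

Lemma inS2 g : star g = g -> sigma g = -1 -> (4%:R : R) = 0 ->
  in_S star sigma [:: (2%:R, g)].
Proof.
move=> hg hs h4; exists [:: (1, [:: (2%:R, g)])]; split.
  move=> c; rewrite inE => /eqP ->; right; left; exists g, 2%:R; split=> //.
  split; last split=> //.
    rewrite hs; apply/eqP => E; apply: (negP hchar); apply/eqP.
    have -> : (2%:R : R) = 1 - -1 by ring.
    by rewrite E subrr.
  by rewrite hs -h4; ring.
by move=> h; rewrite /= /rg_scale /= !coeff_cons coeff_nil !mul1r.
Qed.

Lemma anti {u v} : in_S star sigma u -> in_S star sigma v -> forall g,
  rg_coeff (rg_mul u v) g + rg_coeff (rg_mul v u) g = 0.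
Proof. by move=> hu hv g; rewrite -coeff_cat; apply: hanti. Qed.

Lemma sig_inv z : sigma z * sigma (star z) = 1.
Proof. by rewrite -hsigmaM hcompat. Qed.

Lemma two_neq0 : (2%:R : R) = 0 -> False.
Proof. by move=> E; move: hchar; rewrite E eqxx. Qed.

Lemma unit_neq0 z : sigma z = 0 -> False.
Proof. by move=> E; have := sig_inv z; rewrite E mul0r => /esym/eqP; rewrite oner_eq0. Qed.

Lemma four0 z : star z != z -> (4%:R : R) = 0.
Proof.
move=> hz; have hz' : (z == star z) = false by rewrite eq_sym (negbTE hz).
have H := anti (inS3 z hz) (inS3 z hz) (z * star z)%g.
rewrite /rg_mul /= !coeff_cons coeff_nil !eqgl !eqgr hz' (negbTE hz) eqxx in H.
have hs := sig_inv z; move: H hs; set s := sigma z; set s' := sigma (star z).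
case: eqP => _ H hs.
  have E : 4%:R * s = 0 by rewrite -H; ring.
  have -> : (4%:R : R) = 4%:R * s * s' by rewrite -mulrA hs mulr1.
  by rewrite E mul0r.
exfalso; apply: two_neq0.
have E : 2%:R * s = 0 by rewrite -H; ring.
have -> : (2%:R : R) = 2%:R * s * s' by rewrite -mulrA hs mulr1.
by rewrite E mul0r.
Qed.

Lemma L2 g z : star g = g -> sigma g = -1 -> star z != z ->
  (g * z = z * g)%g \/ (g * star z = z * g)%g.
Proof.
move=> hg hs hz.
have H := anti (inS2 g hg hs (four0 z hz)) (inS3 z hz) (z * g)%g.
rewrite /rg_mul /= !coeff_cons coeff_nil !eqgr (negbTE hz) eqxx in H.
case: eqP H => [->|_ H]; first by left.
case: eqP H => [->|_ H]; first by right.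
exfalso; apply: two_neq0; rewrite -H; ring.
Qed.

Lemma R1 (s t s' t' : R) : s*s' = 1 -> t*t' = 1 -> s'*t' = s*t -> t'*s = s*t ->
  1 + s*t + t = 0 -> (4%:R : R) = 0 -> (2%:R : R) = 0.
Proof.
move=> hs ht hA hB P F.
have ht' : t' = t.
  transitivity ((t'*s)*s'); first by rewrite -mulrA hs mulr1.
  by rewrite hB mulrAC hs mul1r.
have t2 : t*t = 1 by rewrite -{2}ht'.
have s2 : s*s = 1.
  have E : (s*s')*(t*t') = 1 by rewrite hs ht mulr1.
  rewrite (_ : (s*s')*(t*t') = (s*t)*(s'*t')) in E; last by ring.
  rewrite hA in E.
  have -> : s * s = s*s*(t*t) by rewrite t2 mulr1.
  by rewrite -E; ring.
have Q : s + 1 + t = 0.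
  have -> : s + 1 + t = t * (1 + s*t + t) - s*(t*t - 1) - (t*t-1) by ring.
  by rewrite P t2 subrr; ring.
have W : 2%:R * t + 1 = 0.
  have -> : 2%:R * t + 1 = (s*s - 1) - (t*t - 1) - (s + 1 + t)^+2 + 2%:R*(s+1+t)*(1+t) by ring.
  by rewrite s2 t2 Q; ring.
have -> : (2%:R : R) = 2%:R * (2%:R * t + 1) - 4%:R * t by ring.
by rewrite W F; ring.
Qed.

Lemma R2 (s t : R) : 1 + s*t = 0 -> t + s + t = 0 -> (4%:R : R) = 0 -> (2%:R : R) = 0.
Proof.
move=> P Q F.
have -> : (2%:R : R) = 2%:R * (1 + s*t) - 2%:R * t * (t + s + t) + t * t * 4%:R by ring.
by rewrite P Q F; ring.
Qed.

Lemma starXY a b : star (star a * star b)%g = (b * a)%g.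
Proof. by rewrite hstarM !hstarK. Qed.

Lemma conj_eq (x y z : G) : (x * y = y * z)%g -> (x ^ y)%g = z.
Proof. by move=> E; apply: (mulgI y); rewrite -conjgC. Qed.

Lemma main (x y : G) (hx : star x != x) (hy : star y != y)
  (hsy : sigma y != -1) :
  ((x ^ y)%g = x \/ (x ^ y)%g = star x) \/
  (sigma (x * y)%g = -1 /\ (x * y)%g = (star x * star y)%g /\
   (x * star y)%g = (star x * y)%g).
Proof.
have hx' : (x == star x) = false by rewrite eq_sym (negbTE hx).
have hy' : (y == star y) = false by rewrite eq_sym (negbTE hy).
have F := four0 x hx.
have hs := sig_inv x; have ht := sig_inv y.
case: (eqVneq (x * y)%g (y * x)%g) => E1; first by left; left; apply: conj_eq.
case: (eqVneq (x * y)%g (y * star x)%g) => E2; first by left; right; apply: conj_eq.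
right.
have H1 := anti (inS3 x hx) (inS3 y hy) (x * y)%g.
rewrite /rg_mul /= !coeff_cons coeff_nil eqxx !eqgl !eqgr ?hy' ?(negbTE hy) ?hx' ?(negbTE hx) in H1.
have E1' : (y * x == x * y)%g = false by rewrite eq_sym (negbTE E1).
have E2' : (y * star x == x * y)%g = false by rewrite eq_sym (negbTE E2).
rewrite E1' E2' in H1.
move: H1 hs ht.
set s := sigma x; set t := sigma y; set s' := sigma (star x); set t' := sigma (star y).
move=> H1 hs ht.
case: (eqVneq (star y * star x)%g (x * y)%g) => cB4.
  exfalso.
  have cA4 : (star x * star y == x * y)%g = false.
    apply/negbTE/eqP => E; move/eqP: E1; apply.
    by rewrite -(starXY x y) E -cB4 starXY.
  have cB3 : (star y * x == x * y)%g = false.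
    by rewrite -cB4 eqgl hx'.
  rewrite cA4 cB3 cB4 eqxx in H1.
  have hg : star (x * y)%g = (x * y)%g by rewrite hstarM.
  have hsg : sigma (x * y)%g = -1.
    rewrite hsigmaM -/s -/t; apply/eqP; rewrite -subr_eq0 opprK.
    by apply/eqP; rewrite -H1; ring.
  case: (L2 _ _ hg hsg hx) => E.
    by move/eqP: E1; apply; apply: (mulgI x); rewrite [RHS]mulgA E.
  by move/eqP: E2; apply; apply: (mulgI x); rewrite [RHS]mulgA E.
rewrite (negbTE cB4) in H1.
case: (eqVneq (star x * star y)%g (x * y)%g) => cA4; last first.
  exfalso; rewrite (negbTE cA4) in H1.
  case: eqP H1 => _ H1.
    by move/eqP: hsy; apply; rewrite -/t; apply/eqP; rewrite -subr_eq0 opprK -H1; apply/eqP; ring.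
  by move/eqP: (oner_neq0 R); apply; rewrite -H1; ring.
rewrite cA4 eqxx in H1.
case: (eqVneq (star y * x)%g (x * y)%g) => cB3.
  exfalso; rewrite cB3 eqxx in H1; apply: two_neq0.
  apply: (R1 _ _ _ _ hs ht _ _ _ F).
  - by rewrite /s' /t' -hsigmaM cA4 hsigmaM.
  - by rewrite /t' /s -hsigmaM cB3 hsigmaM.
  - by rewrite -H1; ring.
rewrite (negbTE cB3) in H1.
have P1 : 1 + s * t = 0 by rewrite -H1; ring.
split.
  by rewrite hsigmaM -/s -/t; apply/eqP; rewrite -subr_eq0 opprK addrC; apply/eqP.
split; first by [].
case: (eqVneq (star x * y)%g (x * star y)%g) => cA3; first by [].
exfalso.
have cB4' : (star y * star x == x * star y)%g = false.
  apply/negbTE/eqP => E; move/eqP: E2; apply.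
  by rewrite -(starXY y x) E hstarM hstarK.
have H2 := anti (inS3 x hx) (inS3 y hy) (x * star y)%g.
rewrite /rg_mul /= !coeff_cons coeff_nil eqxx !eqgl !eqgr ?(negbTE hy) ?hy' ?hx' ?(negbTE hx) (negbTE cA3) cB4' in H2.
rewrite -/s -/t in H2.
case: (eqVneq (y * x)%g (x * star y)%g) => cB1.
  have cB2 : (y * star x == x * star y)%g = false by rewrite -cB1 eqgl eq_sym hx'.
  have cB3' : (star y * x == x * star y)%g = false by rewrite -cB1 eqgr eq_sym hy'.
  rewrite cB1 eqxx cB2 cB3' in H2.
  by move/eqP: hsy; apply; rewrite -/t; apply/eqP; rewrite -subr_eq0 opprK -H2; apply/eqP; ring.
rewrite (negbTE cB1) in H2.
case: (eqVneq (y * star x)%g (x * star y)%g) => cB2.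
  rewrite cB2 eqxx in H2.
  case: (eqVneq (star y * x)%g (x * star y)%g) => cB3'.
    rewrite cB3' eqxx in H2; apply: two_neq0; apply: (R2 _ _ P1 _ F).
    by rewrite -H2; ring.
  rewrite (negbTE cB3') in H2.
  have hg : star (x * star y)%g = (x * star y)%g by rewrite hstarM hstarK.
  have hsg : sigma (x * star y)%g = -1.
    rewrite hsigmaM -/s -/t'.
    have -> : s = - t by apply/eqP; rewrite -subr_eq0 opprK addrC; apply/eqP; rewrite -H2; ring.
    by rewrite mulNr ht.
  case: (L2 _ _ hg hsg hx) => E.
    by move/eqP: cB3'; apply; apply: (mulgI x); rewrite [LHS]mulgA E.
  by move/negbT/eqP: cB4'; apply; apply: (mulgI x); rewrite [LHS]mulgA E.
rewrite (negbTE cB2) in H2.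
case: eqP H2 => _ H2.
  apply: two_neq0.
  have -> : (2%:R : R) = 2%:R * t * t' by rewrite -mulrA ht mulr1.
  have -> : (2%:R : R) * t = 0 by rewrite -H2; ring.
  by rewrite mul0r.
by apply: (unit_neq0 y); rewrite -/t -H2; ring.
Qed.
End H.
Theorem lemma3p5 (R : comNzRingType) (G : groupType)
  (star : G -> G) (sigma : G -> R)
  (hchar : (2%:R : R) != 0)
  (hstarM : forall x y : G, star (x * y)%g = (star y * star x)%g)
  (hstarK : forall x : G, star (star x) = x)
  (hsigmaM : forall x y : G, sigma (x * y)%g = sigma x * sigma y)
  (hsigmaU : forall x : G, exists u : R, sigma x * u = 1)
  (hsigma_nontriv : exists x : G, sigma x != 1)
  (hcompat : forall x : G, sigma (x * star x)%g = 1)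
  (hanti : S_anticommutative star sigma)
  (x y : G) (hx : star x != x) (hy : star y != y)
  (hsy : sigma y != -1) :
  ((x ^ y)%g = x \/ (x ^ y)%g = star x) \/
  (sigma (x * y)%g = -1 /\ (x * y)%g = (star x * star y)%g /\
   (x * star y)%g = (star x * y)%g).
Proof. by apply: main. Qed.
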